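(* Let $n,m\ge 1$ and let $f(x)=x^{nm}+\sum_{i=1}^{nm}c_i x^{nm-i}$ be an irreducible polynomial over $\mathrm{GF}(2)$ of degree $nm$ with $f(x)\neq x$, and let $e$ be its exponent (the least positive integer with $f(x)\mid x^e-1$), so that $2^{nm}-1=k\cdot e$ for a positive integer $k$. Suppose $e=(2^n-1)\ell$ with $\gcd(2^n-1,\ell)=1$, and write $r=2^n-1$. The $2^{nm}-1$ nonzero binary sequences satisfying $a_j=\sum_{i=1}^{nm}c_i a_{j-i}$ (mod 2) are periodic with least period $e$ and fall into exactly $k$ classes under cyclic shifts; choose one period $(s_0,s_1,\ldots,s_{e-1})$ of a representative of each class and fold it into the $r\times\ell$ array $A$ defined by $A_{\,i \bmod r,\ i \bmod \ell}=s_i$ for $0\le i\le e-1$ (well defined by the Chinese remainder theorem). For $0\le p<r$ and $0\le q<\ell$ let $$R_{p,q}=\{\,i\in\{0,\ldots,e-1\}:\ (i-p)\bmod r\in\{0,\ldots,n-1\},\ (i-q)\bmod \ell\in\{0,\ldots,m-1\}\,\},$$ the set of sequence positions folded into the cyclic $n\times m$ window with top-left corner $(p,q)$, and let $g_{R}(x)=\prod_{\emptyset\neq Q\subseteq R}\sum_{i\in Q}x^{i}$. If $f(x)$ does not divide $g_{R_{p,q}}(x)$ for every such $(p,q)$, then the $k$ folded arrays form a $(2^n-1,\ell;n,m)$-PRAC.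
   Context: All arrays are binary and cyclic (doubly periodic): an $n\times m$ window of an $r\times t$ array $A$ at position $(p,q)$ is the matrix with entries $A_{(p+u)\bmod r,\,(q+v)\bmod t}$, $0\le u<n$, $0\le v<m$. An $(r,t;n,m)$-PRAC (pseudo-random array code) is a set $\mathbb{C}$ of binary $r\times t$ cyclic arrays such that (i) every nonzero binary $n\times m$ matrix appears exactly once as a window in one of the arrays of $\mathbb{C}$ (i.e., there is exactly one pair consisting of an array of $\mathbb{C}$ and a window position at which it appears), and (ii) the shift-and-add property holds: if $\mathcal{A},\mathcal{A}'\in\mathbb{C}$ are distinct, or if $\mathcal{A}\in\mathbb{C}$ and $\mathcal{A}'$ is a nontrivial cyclic (horizontal and/or vertical) shift of $\mathcal{A}$, then the entrywise mod-2 sum $\mathcal{A}+\mathcal{A}'$ is, up to a cyclic shift, an array of $\mathbb{C}$. *)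

(* Defs.v *)
From HB Require Import structures.
From mathcomp Require Import all_boot all_order all_algebra.
Set Implicit Arguments. Unset Strict Implicit. Unset Printing Implicit Defensive.
Import GRing.Theory.
Local Open Scope ring_scope.

Definition aget (r t : nat) (A : 'M['F_2]_(r, t)) (i j : nat) : 'F_2 :=
  match @insub nat (fun k => k < r)%N _ (i %% r)%N,
        @insub nat (fun k => k < t)%N _ (j %% t)%N with
  | Some a, Some b => A a b
  | _, _ => 0
  end.

Definition window (n m r t : nat) (A : 'M['F_2]_(r, t)) (p q : nat)
  : 'M['F_2]_(n, m) :=
  \matrix_(u < n, v < m) aget A (p + u) (q + v).

Definition cshift (r t : nat) (A : 'M['F_2]_(r, t)) (a b : nat)
  : 'M['F_2]_(r, t) :=
  \matrix_(i < r, j < t) aget A (i + a) (j + b).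

Definition PRAC (r t n m : nat) (C : {set 'M['F_2]_(r, t)}) : Prop :=
  (forall W : 'M['F_2]_(n, m), W != 0 ->
     exists! x : 'M['F_2]_(r, t) * ('I_r * 'I_t),
       x.1 \in C /\ window n m x.1 x.2.1 x.2.2 = W) /\
  (forall A A' : 'M['F_2]_(r, t), A \in C ->
     ((A' \in C /\ A' != A) \/
      (exists (a : 'I_r) (b : 'I_t), ((a : nat) != 0%N) || ((b : nat) != 0%N) /\ A' = cshift A a b)) ->
     exists2 B, B \in C & exists (a : 'I_r) (b : 'I_t), A + A' = cshift B a b).

(* LFSR recurrence of degree d with feedback coefficients c_i = f`_(d - i):
   a_j = sum_{i=1}^{d} c_i a_{j-i}  for all j >= d. *)
Definition lfsr (f : {poly 'F_2}) (d : nat) (a : nat -> 'F_2) : Prop :=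
  forall j : nat, (d <= j)%N ->
    a j = \sum_(1 <= i < d.+1) f`_(d - i) * a (j - i)%N.

Definition seq_shift_of (a b : nat -> 'F_2) : Prop :=
  exists d : nat, forall j : nat, b j = a (j + d)%N.

Definition is_exponent (f : {poly 'F_2}) (e : nat) : Prop :=
  [/\ (0 < e)%N, f %| 'X^e - 1 &
   (forall e' : nat, (0 < e')%N -> f %| 'X^e' - 1 -> (e <= e')%N)].

Definition Rset (n m r l e : nat) (p q : nat) : {set 'I_e} :=
  [set i : 'I_e | ((i + r - p) %% r < n)%N && ((i + l - q) %% l < m)%N].

Definition gR (e : nat) (R : {set 'I_e}) : {poly 'F_2} :=
  \prod_(Q : {set 'I_e} | (Q \subset R) && (Q != set0)) \sum_(i in Q) 'X^i.

(* Main.v *)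
Require Import Defs.
From HB Require Import structures.
From mathcomp Require Import all_boot all_order all_algebra all_field zify.
From Stdlib Require Import Classical_Prop.
Import GRing.Theory.
Set Implicit Arguments. Unset Strict Implicit. Unset Printing Implicit Defensive.
Local Open Scope ring_scope.

Lemma F2_cases (x : 'F_2) : x = 0 \/ x = 1.
Proof. case: x => [[|[|k]] Hk]; [left|right|].
- exact: (@ord_inj 2).
- exact: (@ord_inj 2).
- by [].
Qed.

Lemma F2_char : (2%N \in [pchar 'F_2]).
Proof. exact: pchar_Fp. Qed.

Lemma F2_addxx (x : 'F_2) : x + x = 0.
Proof. exact: (addrr_pchar2 F2_char). Qed.

Lemma F2_opp (x : 'F_2) : - x = x.
Proof. exact: (oppr_pchar2 F2_char). Qed.

Definition shiftS (a : nat -> 'F_2) (j : nat) : nat -> 'F_2 := fun i => a (i + j)%N.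
Definition LN (N : nat) (h : {poly 'F_2}) (a : nat -> 'F_2) : 'F_2 :=
  \sum_(i < N) h`_i * a i.
Definition Lf (h : {poly 'F_2}) (a : nat -> 'F_2) : 'F_2 := LN (size h) h a.

Lemma LN_widen N (h : {poly 'F_2}) (a : nat -> 'F_2) : (size h <= N)%N -> Lf h a = LN N h a.
Proof.
move=> hN; rewrite /Lf /LN (big_ord_widen N (fun i => h`_i * a i)) //.
rewrite big_mkcond; apply: eq_bigr => i _; case: ifP => // /negbT.
by rewrite -leqNgt => H; rewrite nth_default // mul0r.
Qed.

Lemma Lf_ext (h : {poly 'F_2}) (a b : nat -> 'F_2) : a =1 b -> Lf h a = Lf h b.
Proof. by move=> E; apply: eq_bigr => i _; rewrite E. Qed.

Lemma Lf_add (h1 h2 : {poly 'F_2}) (a : nat -> 'F_2) : Lf (h1 + h2) a = Lf h1 a + Lf h2 a.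
Proof.
set N := maxn (size h1) (size h2).
rewrite (@LN_widen N) ?(leq_trans (size_polyD _ _)) //.
rewrite (@LN_widen N h1) ?leq_maxl // (@LN_widen N h2) ?leq_maxr //.
by rewrite /LN -big_split; apply: eq_bigr => i _; rewrite coefD mulrDl.
Qed.

Lemma Lf_scale (c : 'F_2) (h : {poly 'F_2}) (a : nat -> 'F_2) : Lf (c *: h) a = c * Lf h a.
Proof.
rewrite (@LN_widen (size h)) ?size_scale_leq // /Lf /LN mulr_sumr.
by apply: eq_bigr => i _; rewrite coefZ mulrA.
Qed.

Lemma Lf0 (a : nat -> 'F_2) : Lf 0 a = 0.
Proof. by rewrite /Lf /LN size_poly0 big_ord0. Qed.

Lemma Lf_opp (h : {poly 'F_2}) (a : nat -> 'F_2) : Lf (- h) a = - Lf h a.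
Proof. by rewrite -scaleN1r Lf_scale mulN1r. Qed.

Lemma Lf_sum (J : Type) (rr : seq J) (P : pred J) (F : J -> {poly 'F_2}) (a : nat -> 'F_2) :
  Lf (\sum_(j <- rr | P j) F j) a = \sum_(j <- rr | P j) Lf (F j) a.
Proof. exact: (big_morph (fun h => Lf h a) (fun x y => Lf_add x y a) (Lf0 a)). Qed.

Lemma Lf_Xn i (a : nat -> 'F_2) : Lf 'X^i a = a i.
Proof.
rewrite /Lf /LN size_polyXn big_ord_recr /= coefXn eqxx mul1r big1 ?add0r //.
by move=> j _; rewrite coefXn (ltn_eqF (ltn_ord j)) mul0r.
Qed.

Lemma Lf_C (c : 'F_2) (a : nat -> 'F_2) : Lf c%:P a = c * a 0%N.
Proof.
rewrite (@LN_widen 1) ?size_polyC_leq1 // /LN big_ord1 coefC //.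
Qed.

Lemma Lf_mulX (h : {poly 'F_2}) (a : nat -> 'F_2) : Lf (h * 'X) a = Lf h (shiftS a 1).
Proof.
rewrite (@LN_widen (size h).+1); last first.
  by rewrite (leq_trans (size_mul_leq _ _)) // size_polyX addn2.
rewrite /Lf /LN big_ord_recl /= coefMX eqxx mul0r add0r.
apply: eq_bigr => i _; rewrite coefMX /= /shiftS addn1 //.
Qed.

Lemma Lf_mul_ann (h v : {poly 'F_2}) : forall (a : nat -> 'F_2),
  (forall i, Lf h (shiftS a i) = 0) -> Lf (v * h) a = 0.
Proof.
elim/poly_ind: v => [|p c IH] a Ha; first by rewrite mul0r Lf0.
rewrite mulrDl mulrAC Lf_add Lf_mulX mul_polyC Lf_scale.
rewrite IH; last first.
  move=> i; rewrite -(Ha (i + 1)%N); apply: Lf_ext => k.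
  by rewrite /shiftS addnA.
rewrite (@Lf_ext h a (shiftS a 0)) ?Ha ?mulr0 ?addr0 // => k.
by rewrite /shiftS addn0.
Qed.

Lemma Lf_f_expand (f : {poly 'F_2}) d (hs : size f = d.+1) (hl : f`_d = 1)
  (b : nat -> 'F_2) :
  Lf f b = b d + \sum_(1 <= i < d.+1) f`_(d - i) * b (d - i)%N.
Proof.
rewrite /Lf /LN hs big_ord_recr /= hl mul1r addrC; congr (_ + _).
rewrite -(big_mkord xpredT (fun i => f`_i * b i)) big_add1 /= big_nat_rev /=.
apply: eq_big_nat => i /andP[_ hi].
by have -> : (0 + d - i.+1 = d - i.+1)%N by lia.
Qed.

Lemma lfsr_ann (f : {poly 'F_2}) d (hs : size f = d.+1) (hl : f`_d = 1)
  (a : nat -> 'F_2) : lfsr f d a <-> forall j, Lf f (shiftS a j) = 0.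
Proof.
split.
  move=> H j; rewrite (Lf_f_expand hs hl) /shiftS.
  have -> : \sum_(1 <= i < d.+1) f`_(d - i) * a (d - i + j)%N
          = \sum_(1 <= i < d.+1) f`_(d - i) * a (d + j - i)%N.
    apply: eq_big_nat => i /andP[h1 h2].
    by have -> : (d - i + j = d + j - i)%N by lia.
  by rewrite -H ?leq_addr // F2_addxx.
move=> H j hj; have := H (j - d)%N; rewrite (Lf_f_expand hs hl) /shiftS.
have -> : (d + (j - d) = j)%N by lia.
have -> : \sum_(1 <= i < d.+1) f`_(d - i) * a (d - i + (j - d))%N
        = \sum_(1 <= i < d.+1) f`_(d - i) * a (j - i)%N.
  apply: eq_big_nat => i /andP[h1 h2].
  by have -> : (d - i + (j - d) = j - i)%N by lia.
by move/eqP; rewrite addr_eq0 F2_opp => /eqP.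
Qed.

Lemma lfsr_shift (f : {poly 'F_2}) d (hs : size f = d.+1) (hl : f`_d = 1)
  (a : nat -> 'F_2) k : lfsr f d a -> lfsr f d (shiftS a k).
Proof.
move=> /(lfsr_ann hs hl) H; apply/(lfsr_ann hs hl) => j.
rewrite -(H (j + k)%N); apply: Lf_ext => i; by rewrite /shiftS addnA.
Qed.

Lemma lfsr_add (f : {poly 'F_2}) d (hs : size f = d.+1) (hl : f`_d = 1)
  (a b : nat -> 'F_2) : lfsr f d a -> lfsr f d b -> lfsr f d (fun i => a i + b i).
Proof.
move=> Ha Hb j hj; rewrite Ha // Hb // -big_split /=.
by apply: eq_bigr => i _; rewrite mulrDr.
Qed.

Lemma lfsr_mul (f : {poly 'F_2}) d (hs : size f = d.+1) (hl : f`_d = 1)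
  (a : nat -> 'F_2) (g : {poly 'F_2}) : lfsr f d a -> Lf (g * f) a = 0.
Proof. by move=> /(lfsr_ann hs hl) H; apply: Lf_mul_ann. Qed.

Lemma lfsr_dvd (f : {poly 'F_2}) d (hs : size f = d.+1) (hl : f`_d = 1)
  (a : nat -> 'F_2) (g : {poly 'F_2}) : lfsr f d a -> f %| g -> Lf g a = 0.
Proof.
move=> Ha /dvdpP [q Hq]; rewrite Hq.
have H := lfsr_mul hs hl q Ha; exact: H.
Qed.

Lemma lfsr_period (f : {poly 'F_2}) d (hs : size f = d.+1) (hl : f`_d = 1)
  (a : nat -> 'F_2) t : lfsr f d a -> f %| 'X^t - 1 -> forall j, a (j + t)%N = a j.
Proof.
move=> Ha Hd j.
have := lfsr_dvd hs hl (lfsr_shift hs hl j Ha) Hd.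
rewrite Lf_add Lf_opp -(@polyC1 'F_2) Lf_C Lf_Xn /shiftS mul1r add0n.
by move/eqP; rewrite subr_eq0 addnC => /eqP.
Qed.

Lemma F2_neq0 (x : 'F_2) : x != 0 -> x = 1.
Proof. by case: (F2_cases x) => ->; rewrite ?eqxx. Qed.

Lemma lfsr_least (f : {poly 'F_2}) d (hs : size f = d.+1) (hl : f`_d = 1)
  (hirr : irreducible_poly f) (a : nat -> 'F_2) t :
  lfsr f d a -> (forall j, a (j + t)%N = a j) -> ~~ (f %| 'X^t - 1) ->
  forall j, a j = 0.
Proof.
move=> Ha Hper Hnd j.
have: coprimep f ('X^t - 1) by rewrite irreducible_poly_coprime.
case/Bezout_coprimepP => [[u v]] /=; rewrite -size_poly_eq1 => /eqP Hs.
set h := u * f + v * ('X^t - 1) in Hs.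
have Hh : h = (h`_0)%:P by apply: size1_polyC; rewrite Hs.
have H0 : h`_0 = 1.
  apply: F2_neq0; apply/eqP => H0; move: Hs; by rewrite Hh H0 size_poly0.
have := erefl (Lf h (shiftS a j)).
rewrite {1}Hh H0 Lf_C mul1r /shiftS add0n => ->.
rewrite Lf_add.
have -> : Lf (u * f) (shiftS a j) = 0.
  have H := lfsr_mul hs hl u (lfsr_shift hs hl j Ha); exact: H.
rewrite add0r; apply: Lf_mul_ann => i.
rewrite Lf_add Lf_opp -(@polyC1 'F_2) Lf_C Lf_Xn /shiftS mul1r !add0n.
by rewrite -addnA addnC Hper subrr.
Qed.

Lemma size_monic (f : {poly 'F_2}) d : size f = d.+1 -> f \is monic.
Proof.
move=> hs; apply/monicP; apply: F2_neq0.
by rewrite lead_coef_eq0 -size_poly_eq0 hs.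
Qed.

Lemma lead_one (f : {poly 'F_2}) d : size f = d.+1 -> f`_d = 1.
Proof.
move=> hs; have /monicP := size_monic hs.
by rewrite lead_coefE hs.
Qed.

Lemma in_qpoly_eq0 (f : {poly 'F_2}) (mi : monic_irreducible_poly f) p :
  (in_qpoly f p == 0) = (f %| p).
Proof.
apply/eqP/idP => [/val_eqP /= | hDp].
  by rewrite -Pdiv.IdomainMonic.modpE (mk_monicE mi) ?mi.
by apply/val_eqP; rewrite /= -Pdiv.IdomainMonic.modpE (mk_monicE mi) ?mi.
Qed.

Lemma polyF2_opp (p : {poly 'F_2}) : - p = p.
Proof. by apply/polyP => i; rewrite coefN F2_opp. Qed.

Lemma polyF2_addxx (p : {poly 'F_2}) : p + p = 0.
Proof. by rewrite -{2}(polyF2_opp p) subrr. Qed.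

Lemma span_lemma (f : {poly 'F_2}) d (hs : size f = d.+1)
  (mi : monic_irreducible_poly f) e (R0 : {set 'I_e})
  (hR : (d <= #|R0|)%N)
  (hnd : forall Q : {set 'I_e}, Q \subset R0 -> Q != set0 ->
           ~~ (f %| \sum_(i in Q) 'X^i))
  (a : nat -> 'F_2) :
  lfsr f d a -> (forall i : 'I_e, i \in R0 -> a i = 0) -> forall j, a j = 0.
Proof.
have hl := lead_one hs.
pose S (Q : {set 'I_e}) : {poly 'F_2} := \sum_(i in Q) 'X^i.
pose phi Q := in_qpoly f (S Q).
have SQ_ind Q : S Q = \sum_(i : 'I_e) (i \in Q)%:R *: 'X^i.
  rewrite /S big_mkcond; apply: eq_bigr => i _.
  by case: (i \in Q); rewrite ?scale1r ?scale0r.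
have Sadd Q Q' : S Q + S Q' = S ((Q :\: Q') :|: (Q' :\: Q)).
  rewrite !SQ_ind -big_split; apply: eq_bigr => i _ /=; rewrite !inE.
  case: (i \in Q); case: (i \in Q') => /=; rewrite ?scale0r ?addr0 ?add0r //.
  by rewrite -scalerDl F2_addxx scale0r.
have inj : {in powerset R0 &, injective phi}.
  move=> Q Q' HQ HQ' E.
  have : in_qpoly f (S Q + S Q') == 0.
    by rewrite in_qpolyD -/(phi Q) E /phi -in_qpolyD polyF2_addxx in_qpoly0.
  rewrite (in_qpoly_eq0 mi) Sadd.
  set D := (Q :\: Q') :|: (Q' :\: Q) => HD.
  have HD0 : D = set0.
    apply/eqP; apply: contraLR HD => HD.
    apply: hnd => //.
    rewrite powersetE in HQ; rewrite powersetE in HQ'.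
    apply/subsetP => i; rewrite !inE => /orP[/andP[_ Hi]|/andP[_ Hi]].
      exact: (subsetP HQ).
    exact: (subsetP HQ').
  apply/setP => i; move/setP: HD0 => /(_ i); rewrite !inE /=.
  by case: (i \in Q); case: (i \in Q').
have card : #|phi @: powerset R0| = #|powerset R0| by apply: card_in_imset.
have full : phi @: powerset R0 = [set: {poly %/ f}].
  apply/eqP; rewrite eqEcard subsetT cardsT card card_powerset card_qpoly.
  by rewrite (mk_monicE mi) hs card_Fp // leq_exp2l.
move=> Ha Hz j.
have : in_qpoly f 'X^j \in phi @: powerset R0 by rewrite full inE.
case/imsetP => Q HQ E.
have : f %| 'X^j + S Q.
  by rewrite -(in_qpoly_eq0 mi) in_qpolyD E /phi -in_qpolyD polyF2_addxx in_qpoly0.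
move=> Hd; have := lfsr_dvd hs hl Ha Hd.
rewrite Lf_add Lf_Xn /S Lf_sum big1 ?addr0 // => i Hi.
rewrite Lf_Xn Hz //; rewrite powersetE in HQ; exact: (subsetP HQ).
Qed.

Lemma frobD (R : comNzRingType) (hc : forall x : R, x + x = 0) (x y : R) k :
  (x + y) ^+ (2 ^ k) = x ^+ (2 ^ k) + y ^+ (2 ^ k).
Proof.
elim: k x y => [|k IH] x y; first by rewrite !expr1.
by rewrite expnS !exprM sqrrD mulr2n hc addr0 IH.
Qed.

Lemma F2_exp (c : 'F_2) k : (0 < k)%N -> c ^+ k = c.
Proof. by move=> hk; case: (F2_cases c) => ->; rewrite ?expr0n ?expr1n ?(gtn_eqF hk). Qed.

Lemma frob_poly (p : {poly 'F_2}) k : p ^+ (2 ^ k) = p \Po 'X^(2 ^ k).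
Proof.
elim/poly_ind: p => [|p c IH]; first by rewrite comp_poly0 expr0n expn_eq0.
rewrite frobD; last exact: polyF2_addxx.
have -> : (c%:P) ^+ (2 ^ k) = c%:P :> {poly 'F_2}.
  by rewrite -rmorphXn /= F2_exp ?expn_gt0.
rewrite exprMn IH.
by rewrite comp_polyD comp_polyM comp_polyX comp_polyC.
Qed.

Lemma in_qpolyX (f p : {poly 'F_2}) k : in_qpoly f (p ^+ k) = (in_qpoly f p) ^+ k.
Proof.
elim: k => [|k IH]; first by rewrite !expr0 in_qpoly1.
by rewrite !exprS in_qpolyM IH.
Qed.

Lemma root_bound (f : {poly 'F_2}) d (hs : size f = d.+1)
  (mi : monic_irreducible_poly f) a b :
  (a < b)%N -> in_qpoly f ('X^(2^a)) = in_qpoly f ('X^(2^b)) -> (d <= b)%N.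
Proof.
move=> hab E.
pose K := {poly %/ f with mi}.
have H2 : forall p : {poly 'F_2}, (in_qpoly f p)^+(2^a) = (in_qpoly f p)^+(2^b).
  move=> p; rewrite -[LHS]in_qpolyX -[RHS]in_qpolyX (frob_poly p a) (frob_poly p b).
  by rewrite !in_qpoly_comp_horner; congr (horner _ _); exact: E.
have Hfix : forall y : K, y ^+ (2^a) = y ^+ (2^b).
  move=> y.
  have Hy : in_qpoly f (val y) = y.
    apply/val_inj => /=; rewrite Pdiv.CommonRing.rmodp_small //.
    exact: size_mk_monic.
  (by move: (H2 (val y)); rewrite Hy).
pose pK : {poly K} := 'X^(2^b) - 'X^(2^a).
have hab2 : (2^a < 2^b)%N by rewrite ltn_exp2l.
have pn0 : pK != 0.
  apply/eqP => /(congr1 (fun q : {poly K} => q`_(2^b))).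
  rewrite coefB !coefXn eqxx (gtn_eqF hab2) subr0 coef0 => /eqP.
  by rewrite oner_eq0.
have hall : all (root pK) (enum K).
  apply/allP => y _; rewrite /root /pK hornerD hornerN !hornerXn Hfix subrr //.
have := max_poly_roots pn0 hall (enum_uniq _).
rewrite -cardE card_qfpoly hs card_Fp //= => H.
have hsz : (size pK <= (2^b).+1)%N.
  rewrite /pK (leq_trans (size_polyD _ _)) // size_polyN !size_polyXn geq_max.
  by rewrite leqnn ltnW.
have := leq_trans H hsz; rewrite ltnS leq_exp2l //.
Qed.

Lemma gproof n l e (hr : (0 < 2^n - 1)%N) (He : e = ((2^n - 1) * l)%N) (he : (0 < e)%N) i :
  ((2 ^ (n * i)) %% e %/ (2^n - 1) < l)%N.
Proof. by rewrite ltn_divLR // [(l * _)%N]mulnC -He ltn_mod. Qed.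

Lemma m_le_l (f : {poly 'F_2}) n m l e (hs : size f = (n * m).+1)
  (mi : monic_irreducible_poly f)
  (hn : (1 <= n)%N) (He : e = ((2^n - 1) * l)%N) (hl0 : (0 < l)%N)
  (hdiv : f %| 'X^e - 1) : (m <= l)%N.
Proof.
have hr : (0 < 2^n - 1)%N.
  by rewrite subn_gt0 -{1}(expn0 2) ltn_exp2l.
have he : (0 < e)%N by rewrite He muln_gt0 hr.
have HXe : in_qpoly f 'X^e = 1.
  have H0 : in_qpoly f ('X^e + 1) = 0.
    by apply/eqP; rewrite (in_qpoly_eq0 mi) -[1](polyF2_opp) .
  have -> : 'X^e = ('X^e + 1) + 1 :> {poly 'F_2} by rewrite -addrA polyF2_addxx addr0.
  by rewrite in_qpolyD H0 add0r in_qpoly1.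
have HXmod (k : nat) : in_qpoly f 'X^k = in_qpoly f 'X^(k %% e)%N.
  rewrite {1}(divn_eq k e) exprD mulnC exprM in_qpolyM in_qpolyX HXe expr1n mul1r //.
pose g (i : 'I_l.+1) : 'I_l := Ordinal (gproof hr He he i).
have : ~~ injectiveb g.
  by apply/negP => /injectiveP /leq_card; rewrite !card_ord ltnn.
case/injectivePn => x [y hxy Exy].
have key (i : nat) : ((2^(n*i) %% e) %% (2^n - 1) = 1 %% (2^n - 1))%N.
  rewrite He modn_dvdm ?dvdn_mulr // expnM -modnXm.
  have h2 : (2 ^ n %% (2^n - 1) = 1 %% (2^n - 1))%N.
    by rewrite {1}(_ : 2 ^ n = (2^n - 1) + 1)%N ?modnDl // subnK // expn_gt0.
  by rewrite h2 modnXm exp1n.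
have Ek : (2^(n*x) %% e = 2^(n*y) %% e)%N.
  have Hq := congr1 val Exy; rewrite /= in Hq.
  by rewrite (divn_eq (2^(n*x) %% e) (2^n - 1)) (divn_eq (2^(n*y) %% e) (2^n - 1)) Hq !key.
have HE : in_qpoly f 'X^(2^(n*x)) = in_qpoly f 'X^(2^(n*y)).
  by rewrite HXmod Ek -HXmod.
have hsn : size f = (n * m).+1 := hs.
move: hxy; case: (ltngtP x y) => [hlt|hlt|heq] hxy.
- have := root_bound hsn mi (a := (n * x)%N) (b := (n * y)%N).
  rewrite ltn_pmul2l // => /(_ hlt HE).
  move=> H; have Hy : (y <= l)%N := ltn_ord y.
  have := leq_trans H (leq_mul (leqnn n) Hy).
  by rewrite leq_pmul2l.
- have := root_bound hsn mi (a := (n * y)%N) (b := (n * x)%N).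
  rewrite ltn_pmul2l // => /(_ hlt (esym HE)).
  move=> H; have Hy : (x <= l)%N := ltn_ord x.
  have := leq_trans H (leq_mul (leqnn n) Hy).
  by rewrite leq_pmul2l.
- by move: hxy; rewrite (ord_inj heq) eqxx.
Qed.

Lemma aw_lfsr (f : {poly 'F_2}) d (hs : size f = d.+1) (w : 'rV['F_2]_d) :
  lfsr f d (fun j => \sum_(k < d) w 0 k * ('X^j %% f)`_k).
Proof.
have hl := lead_one hs.
apply/(lfsr_ann hs hl) => j.
pose phi (h : {poly 'F_2}) := \sum_(k < d) w 0 k * (h %% f)`_k.
have phiD : forall h1 h2, phi (h1 + h2) = phi h1 + phi h2.
  move=> h1 h2; rewrite /phi -big_split; apply: eq_bigr => k _.
  by rewrite modpD coefD mulrDr.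
have phiZ : forall c h, phi (c *: h) = c * phi h.
  move=> c h; rewrite /phi mulr_sumr; apply: eq_bigr => k _.
  by rewrite modpZl coefZ mulrCA.
have phi0 : phi 0 = 0.
  by rewrite /phi big1 // => k _; rewrite mod0p coef0 mulr0.
have phisum : phi (\sum_(i < size f) f`_i *: 'X^(i + j))
            = \sum_(i < size f) f`_i * phi 'X^(i + j).
  rewrite (big_morph phi phiD phi0); apply: eq_bigr => i _; exact: phiZ.
have Hf : \sum_(i < size f) f`_i *: 'X^(i + j) = 'X^j * f.
  have Ef : \sum_(i < size f) f`_i *: 'X^i = f by rewrite -poly_def coefK.
  transitivity ('X^j * \sum_(i < size f) f`_i *: 'X^i); last by rewrite Ef.
  rewrite mulr_sumr; apply: eq_bigr => i _.
  by rewrite -scalerAr -exprD addnC.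
have : phi ('X^j * f) = 0.
  by rewrite /phi modp_mull big1 // => k _; rewrite coef0 mulr0.
rewrite -Hf phisum => H0; rewrite /Lf /LN.
transitivity (\sum_(i < size f) f`_i * phi 'X^(i + j)); last exact: H0.
by apply: eq_bigr => i _.
Qed.

Lemma aw_small (f : {poly 'F_2}) d (hs : size f = d.+1) (w : 'rV['F_2]_d)
  (k : 'I_d) : \sum_(k' < d) w 0 k' * ('X^k %% f)`_k' = w 0 k.
Proof.
rewrite modp_small ?size_polyXn ?hs ?ltnS ?ltn_ord //.
rewrite (bigD1 k) //= coefXn eqxx mulr1 big1 ?addr0 // => k' hk'.
have hk : (k' : nat) != k by [].
by rewrite coefXn (negbTE hk) mulr0.
Qed.

Lemma aget_mod r t (A : 'M['F_2]_(r, t)) i j i' j' :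
  (i %% r = i' %% r)%N -> (j %% t = j' %% t)%N -> aget A i j = aget A i' j'.
Proof. by move=> h1 h2; rewrite /aget h1 h2. Qed.

Lemma aget_ord r t (A : 'M['F_2]_(r, t)) (i : 'I_r) (j : 'I_t) : aget A i j = A i j.
Proof.
rewrite /aget.
case: insubP => [a1 _ Ha1|]; last by rewrite ltn_mod (leq_ltn_trans (leq0n _) (ltn_ord i)).
case: insubP => [b1 _ Hb1|]; last by rewrite ltn_mod (leq_ltn_trans (leq0n _) (ltn_ord j)).
have -> : a1 = i by apply: val_inj; rewrite Ha1 modn_small.
have -> : b1 = j by apply: val_inj; rewrite Hb1 modn_small.
by [].
Qed.

Unset Implicit Arguments.

Theorem theorem7 (n m : nat) (f : {poly 'F_2}) (e l : nat)
  (I : finType) (s : I -> nat -> 'F_2) (A : I -> 'M['F_2]_(2 ^ n - 1, l)) :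
  (1 <= n)%N -> (1 <= m)%N ->
  size f = (n * m).+1 -> irreducible_poly f -> f != 'X ->
  is_exponent f e ->
  e = ((2 ^ n - 1) * l)%N -> coprime (2 ^ n - 1) l ->
  (forall x : I, lfsr f (n * m) (s x) /\ exists j, s x j != 0) ->
  (forall a : nat -> 'F_2, lfsr f (n * m) a -> (exists j, a j != 0) ->
     exists! x : I, seq_shift_of (s x) a) ->
  (forall (x : I) (i : nat), (i < e)%N -> aget (A x) i i = s x i) ->
  (forall (p : 'I_(2 ^ n - 1)) (q : 'I_l),
     ~~ (f %| gR (Rset n m (2 ^ n - 1) l e p q))) ->
  PRAC n m [set A x | x in I].
Proof.
move=> hn hm hs hirr hfX [he hdiv hmin] He hcop Hs Huniq hA hgR.
have hr : (0 < 2^n - 1)%N.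
  by rewrite subn_gt0 -{1}(expn0 2) ltn_exp2l.
have hnr : (n <= 2^n - 1)%N.
  have := ltn_expl n (ltnSn 1); lia.
have hl0 : (0 < l)%N by move: he; rewrite He muln_gt0 => /andP[].
have mi : monic_irreducible_poly f := (hirr, size_monic hs).
have hlead := lead_one hs.
have hml := m_le_l hs mi hn He hl0 hdiv.
move: (2^n - 1)%N A He hcop hA hgR hr hnr => r A He hcop hA hgR hr hnr.
pose V a := lfsr f (n * m) a.
have per a : V a -> forall j q, a (j + q * e)%N = a j.
  move=> Ha j q; elim: q j => [|q IH] j; first by rewrite mul0n addn0.
  by rewrite mulSn addnA IH (lfsr_period hs hlead Ha hdiv).
have permod a : V a -> forall i j, (i = j %[mod e])%N -> a i = a j.
  move=> Ha i j Hij.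
  by rewrite (divn_eq i e) (divn_eq j e) Hij addnC per // addnC per.
have edvd : (r %| e)%N by rewrite He dvdn_mulr.
have edvdl : (l %| e)%N by rewrite He dvdn_mull.
have crt i j : (i = j %[mod r])%N -> (i = j %[mod l])%N -> (i = j %[mod e])%N.
  move=> h1 h2; apply/eqP; rewrite He chinese_remainder // h1 h2 !eqxx.
  by [].
pose c u v := chinese r l u v.
have cr u v : (c u v = u %[mod r])%N := chinese_modl hcop u v.
have cl u v : (c u v = v %[mod l])%N := chinese_modr hcop u v.
have c00 : c 0%N 0%N = 0%N by rewrite /c /chinese !mul0n.
have Vs x : V (s x) := (Hs x).1.
have agetA x p q u v : aget (A x) (p + u) (q + v) = s x (c u v + c p q)%N.
  pose i := (c (p + u) (q + v) %% e)%N.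
  have hi : (i < e)%N by rewrite ltn_pmod.
  rewrite (@aget_mod _ _ _ _ _ i i); first last.
  - by rewrite /i modn_dvdm // (cl (p+u)%N (q+v)%N).
  - by rewrite /i modn_dvdm // (cr (p+u)%N (q+v)%N).
  rewrite hA //; apply: permod (Vs x) _ _ _.
  rewrite /i modn_mod; apply: crt.
    by rewrite (cr (p+u)%N (q+v)%N) -[((c u v + c p q) %% r)%N]modnDm (cr u v) (cr p q) modnDm addnC.
  by rewrite (cl (p+u)%N (q+v)%N) -[((c u v + c p q) %% l)%N]modnDm (cl u v) (cl p q) modnDm addnC.
have Amx x : A x = \matrix_(i, j) s x (c i j).
  apply/matrixP => i j; rewrite mxE -aget_ord.
  by rewrite -[i : nat]add0n -[j : nat]add0n agetA c00 addn0.
pose win (a : nat -> 'F_2) : 'M['F_2]_(n, m) := \matrix_(u, v) a (c u v).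
have winA x p q : window n m (A x) p q = win (shiftS (s x) (c p q)).
  by apply/matrixP => u v; rewrite !mxE agetA.
pose R0 := Rset n m r l e 0 0.
have hnd : forall Q : {set 'I_e}, Q \subset R0 -> Q != set0 ->
    ~~ (f %| \sum_(i in Q) 'X^i).
  move=> Q HQ HQ0; apply/negP => HQd.
  move/negP: (hgR (Ordinal hr) (Ordinal hl0)); apply.
  rewrite /gR (bigD1 Q) /=; last by apply/andP; split.
  exact: dvdp_mulr.
have hR : (n * m <= #|R0|)%N.
  pose phi (uv : 'I_n * 'I_m) : 'I_e := Ordinal (ltn_pmod (c uv.1 uv.2) he).
  have phiR uv : phi uv \in R0.
    rewrite inE /= !subn0 !modnDr; apply/andP; split.
      rewrite modn_dvdm // (cr uv.1 uv.2) modn_small //.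
      exact: leq_trans (ltn_ord _) hnr.
    rewrite modn_dvdm // (cl uv.1 uv.2) modn_small //.
    exact: leq_trans (ltn_ord _) hml.
  have phiinj : injective phi.
    move=> [u v] [u' v'] /(congr1 val) /= E.
    have Eu : u = u' :> nat.
      have := congr1 (modn^~ r) E; rewrite /= !modn_dvdm // (cr u v) (cr u' v').
      rewrite !modn_small //; exact: leq_trans (ltn_ord _) hnr.
    have Ev : v = v' :> nat.
      have := congr1 (modn^~ l) E; rewrite /= !modn_dvdm // (cl u v) (cl u' v').
      rewrite !modn_small //; exact: leq_trans (ltn_ord _) hml.
    by rewrite (ord_inj Eu) (ord_inj Ev).
  have Hsub : phi @: [set: 'I_n * 'I_m] \subset R0.
    by apply/subsetP => i /imsetP [uv _ ->].
  have := subset_leq_card Hsub.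
  by rewrite card_imset // cardsT card_prod !card_ord.
have win_zero a : V a -> win a = 0 -> forall j, a j = 0.
  move=> Ha Hw; apply: (span_lemma hs mi hR hnd Ha) => i Hi.
  rewrite inE /= !subn0 !modnDr in Hi; case/andP: Hi => Hu Hv.
  have -> : a i = a (c (i %% r) (i %% l))%N.
    apply: permod Ha _ _ _; apply: crt.
      by rewrite (cr (i %% r)%N (i %% l)%N) modn_mod.
    by rewrite (cl (i %% r)%N (i %% l)%N) modn_mod.
  have := congr1 (fun M : 'M_(n, m) => M (Ordinal Hu) (Ordinal Hv)) Hw.
  by rewrite !mxE.
pose aw (w : 'rV['F_2]_(n * m)) (j : nat) :=
  \sum_(k < n * m) w 0 k * ('X^j %% f)`_k.
have awV w : V (aw w) := aw_lfsr hs w.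
have surj W : exists a, V a /\ win a = W.
  have inj : injective (fun w => win (aw w)).
    move=> w w' /= E.
    have HW0 : win (aw (w - w')) = 0.
      apply/matrixP => u v; have := congr1 (fun M : 'M_(n, m) => M u v) E.
      rewrite !mxE /aw => E'.
      rewrite (eq_bigr (fun k => w 0 k * ('X^(c u v) %% f)`_k
                              - w' 0 k * ('X^(c u v) %% f)`_k)); last first.
        by move=> k _; rewrite !mxE mulrBl.
      by rewrite sumrB E' subrr.
    have Hz := win_zero _ (awV _) HW0.
    apply/rowP => k; have := Hz k; rewrite /aw (aw_small hs (w - w') k) !mxE.
    by move/eqP; rewrite subr_eq0 => /eqP.
  have hc : (#|{: 'M['F_2]_(n, m)}| <= #|{: 'rV['F_2]_(n * m)}|)%N.
    by rewrite !card_mx mul1n.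
  have := inj_card_onto inj hc W; case/codomP => w ->.
  by exists (aw w); split.
have key x (u u' : nat) : (u <= u')%N -> (u' < e)%N ->
    (forall j, s x (j + u)%N = s x (j + u')%N) -> u = u'.
  move=> h1 h2 H; set t := (u' - u)%N.
  have Ht : forall k, s x (k + t)%N = s x k.
    move=> k.
    have E1 : (k + (e - u) + u = k + 1 * e)%N by lia.
    have E2 : (k + (e - u) + u' = (k + t) + 1 * e)%N by rewrite /t; lia.
    by rewrite -(per _ (Vs x) (k + t)%N 1) -E2 -H E1 per.
  case: (posnP t) => [t0|tpos]; first by move: t0; rewrite /t; lia.
  have hnd' : ~~ (f %| 'X^t - 1).
    by apply/negP => /(hmin t tpos); rewrite /t; lia.
  have Z := lfsr_least hs hlead hirr (Vs x) Ht hnd'.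
  by case: (Hs x) => _ [j0]; rewrite Z eqxx.
have uniqW x y (p p' : 'I_r) (q q' : 'I_l) :
    win (shiftS (s x) (c p q)) = win (shiftS (s y) (c p' q')) ->
    [/\ x = y, p = p' & q = q'].
  move=> E.
  have Hsh : forall j, s x (j + c p q)%N = s y (j + c p' q')%N.
    pose b j := s x (j + c p q)%N + s y (j + c p' q')%N.
    have Vb : V b.
      exact: (lfsr_add hs hlead (lfsr_shift hs hlead (c p q) (Vs x))
                              (lfsr_shift hs hlead (c p' q') (Vs y))).
    have Hb : win b = 0.
      apply/matrixP => u v; have := congr1 (fun M : 'M_(n, m) => M u v) E.
      by rewrite !mxE /shiftS /b => ->; rewrite F2_addxx.
    move=> j; have := win_zero b Vb Hb j; rewrite /b => /eqP.
    by rewrite addr_eq0 F2_opp => /eqP.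
  have Exy : x = y.
    pose a := shiftS (s x) (c p q).
    have Va : V a := lfsr_shift hs hlead _ (Vs x).
    have Hnz : exists j, a j != 0.
      case: (Hs x) => _ [j0 Hj0]; exists (j0 + c p q * (e - 1))%N.
      by rewrite /a /shiftS -addnA -mulnSr subn1 prednK // per.
    case: (Huniq a Va Hnz) => z [_ Hz].
    have hx : z = x by apply: Hz; exists (c p q).
    have hy : z = y by apply: Hz; exists (c p' q') => j; rewrite /a /shiftS Hsh.
    by rewrite -hx -hy.
  subst y.
  have Hmod : (c p q %% e = c p' q' %% e)%N.
    have H' : forall j, s x (j + c p q %% e)%N = s x (j + c p' q' %% e)%N.
      move=> j.
      rewrite (permod _ (Vs x) (j + c p q %% e)%N (j + c p q)%N); last first.
        by rewrite modnDmr.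
      rewrite Hsh; apply: permod (Vs x) _ _ _; by rewrite modnDmr.
    case: (leqP (c p q %% e) (c p' q' %% e))%N => h.
      exact: (key x _ _ h (ltn_pmod _ he) H').
    apply/esym; exact: (key x _ _ (ltnW h) (ltn_pmod _ he) (fun j => esym (H' j))).
  split=> //; apply: ord_inj.
    have := congr1 (modn^~ r) Hmod; rewrite /= !modn_dvdm // (cr p q) (cr p' q').
    by rewrite !modn_small.
  have := congr1 (modn^~ l) Hmod; rewrite /= !modn_dvdm // (cl p q) (cl p' q').
  by rewrite !modn_small.
split.
  move=> W HW.
  have [a [Va Ea]] := surj W.
  have Hnz : exists j, a j != 0.
    by case/matrix0Pn: HW => u [v Huv]; exists (c u v); move: Huv; rewrite -Ea mxE.
  case: (Huniq a Va Hnz) => x [[dl Hdl] _].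
  pose p : 'I_r := Ordinal (ltn_pmod dl hr).
  pose q : 'I_l := Ordinal (ltn_pmod dl hl0).
  have Hcpq : (c p q = dl %[mod e])%N.
    apply: crt; first by rewrite (cr p q) /= modn_mod.
    by rewrite (cl p q) /= modn_mod.
  have Ew : win (shiftS (s x) (c p q)) = W.
    rewrite -Ea; apply/matrixP => u v; rewrite !mxE /shiftS Hdl.
    by apply: permod (Vs x) _ _ _; rewrite -modnDmr Hcpq modnDmr.
  exists (A x, (p, q)); split.
    split; first by apply/imsetP; exists x.
    by rewrite winA.
  case=> X [p' q'] /= [HX EX]; case/imsetP: HX => y _ EXy; subst X.
  rewrite winA -Ew in EX.
  by case: (uniqW x y p p' q q' (esym EX)) => -> -> ->.
move=> A1 A2 HA1 Hcase.
case/imsetP: HA1 => x _ EA1; subst A1.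
have sumcase : forall (b : nat -> 'F_2) (M : 'M['F_2]_(r, l)), V b ->
    (exists j, b j != 0) -> M = \matrix_(i, j) b (c i j) ->
    exists2 B, B \in [set A x | x in I] &
      exists (a : 'I_r) (b0 : 'I_l), M = cshift B a b0.
  move=> b M Vb Hnz EM.
  case: (Huniq b Vb Hnz) => z [[dl Hdl] _].
  exists (A z); first by apply/imsetP; exists z.
  exists (Ordinal (ltn_pmod dl hr)), (Ordinal (ltn_pmod dl hl0)).
  have Hc : (c (dl %% r) (dl %% l) = dl %[mod e])%N.
    apply: crt; first by rewrite (cr (dl %% r)%N (dl %% l)%N) modn_mod.
    by rewrite (cl (dl %% r)%N (dl %% l)%N) modn_mod.
  rewrite EM; apply/matrixP => i j; rewrite !mxE agetA Hdl.
  apply: permod (Vs z) _ _ _.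
  by rewrite /= [in RHS]addnC -[in RHS]modnDmr Hc modnDmr.
case: Hcase => [[HA2 Hne] | [al [be [Hab EA2]]]].
  case/imsetP: HA2 => y _ EA2; subst A2.
  have Hne' : A x - A y != 0 by rewrite subr_eq0 eq_sym.
  apply: (sumcase (fun j => s x j + s y j)).
  - exact: (lfsr_add hs hlead (Vs x) (Vs y)).
  - case/matrix0Pn: Hne' => i [j Hij]; exists (c i j).
    by move: Hij; rewrite (Amx x) (Amx y) !mxE F2_opp.
  - by rewrite (Amx x) (Amx y); apply/matrixP => i j; rewrite !mxE.
subst A2.
pose D := c al be.
apply: (sumcase (fun j => s x j + s x (j + D)%N)).
- exact: (lfsr_add hs hlead (Vs x) (lfsr_shift hs hlead D (Vs x))).
- case: (classic (exists j, s x j + s x (j + D)%N != 0)) => // Hno.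
  exfalso.
  have Hp : forall j, s x (j + 0)%N = s x (j + D %% e)%N.
    move=> j; rewrite addn0.
    have : ~~ (s x j + s x (j + D)%N != 0) by apply/negP => H; apply: Hno; exists j.
    rewrite negbK addr_eq0 F2_opp => /eqP ->.
    by apply: permod (Vs x) _ _ _; rewrite modnDmr.
  have HD0 := key x 0%N (D %% e)%N (leq0n _) (ltn_pmod _ he) Hp.
  have Hal : al = 0 :> nat.
    have := congr1 (modn^~ r) HD0; rewrite /= mod0n modn_dvdm // (cr al be).
    by rewrite modn_small.
  have Hbe : be = 0 :> nat.
    have := congr1 (modn^~ l) HD0; rewrite /= mod0n modn_dvdm // (cl al be).
    by rewrite modn_small.
  by move: Hab; rewrite Hal Hbe.
- apply/matrixP => i j; rewrite !mxE.
  have -> : A x i j = s x (c i j) by rewrite {1}(Amx x) mxE.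
  by rewrite (agetA x i j al be) (addnC (c al be)).
Qed.
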